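(* Let $A$ be the semi-local highest-score matrix of strings $x$ (length $m$) and $y$ (length $n$), and let $w, r$ be positive integers. To represent the $(w,r)$-restricted highest-score matrix $A^{w,r}$ implicitly, it suffices to store only those critical points $(\hat{\imath}, \hat{\jmath})$ of the unrestricted matrix $A$ for which $\hat{\jmath} - \hat{\imath} < w$; that is, every defined entry $A^{w,r}(i,j)$ is determined by this set of critical points.
   Context: Notation: $[i:j] = \{i, i+1, \ldots, j\}$ and $\langle i:j\rangle = \{i+\tfrac12, i+\tfrac32, \ldots, j-\tfrac12\}$ (odd half-integers); odd half-integer variables are written with a hat. The alignment dag of $x$ and $y$ has vertices $v_{k,l}$, $k\in[0:m]$, $l\in[0:n]$, horizontal edges $v_{k,l-1}\to v_{k,l}$ and vertical edges $v_{k-1,l}\to v_{k,l}$ of score $0$, and diagonal edges $v_{k-1,l-1}\to v_{k,l}$ of score $1$ present exactly when $x_k = y_l$. The (semi-local) highest-score matrix $A$ has as entry $A(i,j)$ the maximum score of a path in this dag from the top boundary at column $i$ to the bottom boundary at column $j$ (i.e. the LLCS of $x$ and the substring of $y$ between columns $i$ and $j$), in the standard semi-local framework of Tiskin. A critical point of $A$ is a pair of odd half-integers $(\hat{\imath}, \hat{\jmath})$ such that $A(\hat{\imath}+\tfrac12,\hat{\jmath}-\tfrac12) + 1 = A(\hat{\imath}-\tfrac12,\hat{\jmath}-\tfrac12) = A(\hat{\imath}+\tfrac12,\hat{\jmath}+\tfrac12) = A(\hat{\imath}-\tfrac12,\hat{\jmath}+\tfrac12)$. Known fact (Tiskin): the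 0/1 matrix $D_A$ marking the critical points is a permutation matrix, and $A(i,j) = j - i - D_A^\Sigma(i,j)$, where $D_A^\Sigma(i,j)$ is the number of critical points $(\hat{\imath},\hat{\jmath})$ with $\hat{\imath} > i$ and $\hat{\jmath} < j$. The $(w,r)$-restricted highest-score matrix $A^{w,r}$ is defined by $A^{w,r}(i,j) = A(i,j)$ if $j - i \le w$ and $i \bmod r = j \bmod r = 0$, and $A^{w,r}(i,j)$ undefined otherwise. *)

(* Defs.v *)
From mathcomp Require Import all_boot all_order all_algebra.
Set Implicit Arguments. Unset Strict Implicit. Unset Printing Implicit Defensive.
Import Order.TTheory GRing.Theory Num.Theory.
Local Open Scope ring_scope.

(* Length of a longest common subsequence, with a general character
   matching relation [mt]; this is the standard alignment-dag recurrence: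
   max of the vertical edge, the horizontal edge, and the diagonal edge
   (score 1, present iff the characters match). *)
Fixpoint lcs_with (A B : Type) (mt : A -> B -> bool) (s : seq A) (t : seq B)
  : nat :=
  match s with
  | [::] => 0%N
  | a :: s' =>
    (fix lcs_t (t : seq B) : nat :=
       match t with
       | [::] => 0%N
       | b :: t' =>
         maxn (lcs_with mt s' t)
              (maxn (lcs_t t') (mt a b + lcs_with mt s' t')%N)
       end) t
  end.

(* Character of the padded string  ?^m y ?^m  sitting between columns
   l-1 and l (l : int); [None] is the wildcard '?', which matches any
   character. Columns 1..n carry y_1..y_n. *)
Definition ychar (T : Type) (y : seq T) (l : int) : option T :=
  if (0 < l) then onth y (absz l).-1 else None.

Definition wmatch (T : eqType) (a : T) (c : option T) : bool :=
  if c is Some b then a == b else true.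

Definition psub (T : Type) (y : seq T) (i j : int) : seq (option T) :=
  [seq ychar y (i + k%:Z) | k <- iota 1 (absz (j - i))].

(* Tiskin's semi-local highest-score matrix A(i,j), i in [-m:n],
   j in [0:m+n]; A(i,j) = j - i when j < i. *)
Definition hsm (T : eqType) (x y : seq T) (i j : int) : int :=
  if i <= j then (lcs_with (@wmatch T) x (psub y i j))%:Z else j - i.

(* Odd half-integers are encoded by integers: h encodes h + 1/2.
   (h, k) encodes the point (hat i, hat j) = (h + 1/2, k + 1/2), and is a
   critical point of A when
   A(h+1,k) + 1 = A(h,k) = A(h+1,k+1) = A(h,k+1),
   with hat i in <-m:n> and hat j in <0:m+n>. *)
Definition critical (T : eqType) (x y : seq T) (h k : int) : bool :=
  let m := (size x)%:Z in let n := (size y)%:Z in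
  [&& - m <= h, h < n, 0 <= k, k < m + n,
      hsm x y (h + 1) k + 1 == hsm x y h k,
      hsm x y h k == hsm x y (h + 1) (k + 1) &
      hsm x y (h + 1) (k + 1) == hsm x y h (k + 1)].

Definition restricted_dom (m n w r : nat) (i j : int) : bool :=
  [&& - (m%:Z) <= i, i <= n%:Z, 0 <= j, j <= (m + n)%N%:Z,
      j - i <= w%:Z, (i %% r%:Z)%Z == 0 & (j %% r%:Z)%Z == 0].

(* Main.v *)
Require Import Defs.
From mathcomp Require Import all_boot all_order all_algebra zify.
Import Order.TTheory GRing.Theory Num.Theory.

Section LCS.
Variables (A B : Type) (mt : A -> B -> bool).
Local Notation L := (lcs_with mt).

Lemma L_nil_r s : L s [::] = 0%N. Proof. by case: s. Qed.
Lemma L_cons a s b v : L (a::s) (b::v) =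
  maxn (L s (b::v)) (maxn (L (a::s) v) (mt a b + L s v)). Proof. by []. Qed.

Lemma L_mono_s a s v : (L s v <= L (a::s) v)%N.
Proof. case: v => [|b v]; first by rewrite L_nil_r. rewrite L_cons; lia. Qed.

Lemma L_pre s b v : (L s v <= L s (b::v) <= (L s v).+1)%N.
Proof.
elim: s v => [|a s IH] v //.
have := IH v; have := L_mono_s a s v; rewrite L_cons; lia.
Qed.

Lemma L_suf s v1 v2 : (L s v2 <= L s (v1 ++ v2))%N.
Proof.
elim: v1 => [|b v1 IH] //=; have := L_pre s b (v1 ++ v2); lia.
Qed.

Lemma L_app s v b : (L s v <= L s (rcons v b) <= (L s v).+1)%N.
Proof.
elim: s v => [|a s IH] v //.
elim: v => [|c v IHv].
  have := IH [::]; rewrite (_ : rcons [::] b = [:: b]) // L_cons !L_nil_r; lia.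
have := IH (c :: v); have := IH v; move: IHv; rewrite rcons_cons !L_cons; lia.
Qed.

Lemma L_single a v : L [:: a] v = has (mt a) v.
Proof.
elim: v => [|b v IH] //; rewrite L_cons IH /=.
by case: (mt a b); case: (has _ _).
Qed.

Lemma L_split_le a s v1 v2 : (L [::a] v1 + L s v2 <= L (a::s) (v1 ++ v2))%N.
Proof.
elim: v1 => [|b v1 IH]; first exact: L_mono_s.
rewrite cat_cons L_cons.
have := L_pre (a::s) b (v1 ++ v2); have := L_suf s v1 v2.
move: IH; rewrite !L_single /=. case: (mt a b); case: (has _ _) => /=; lia.
Qed.

Lemma L_split_ex a s v : exists v1 v2, v = v1 ++ v2 /\
  (L (a::s) v <= L [::a] v1 + L s v2)%N.
Proof.
elim: v => [|b v [v1 [v2 [-> H]]]].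
  by exists [::], [::]; rewrite !L_nil_r.
rewrite L_cons.
have [h|h] := leqP (maxn (L (a :: s) (v1 ++ v2)) (mt a b + L s (v1 ++ v2))) (L s (b :: v1 ++ v2)).
  exists [::], (b :: v1 ++ v2); split => //; rewrite /= L_nil_r; lia.
have [h2|h2] := leqP (mt a b + L s (v1 ++ v2)) (L (a :: s) (v1 ++ v2)).
  exists (b :: v1), v2; split => //.
  have : (L [::a] v1 <= L [::a] (b::v1))%N by rewrite !L_single /=; case: (mt a b); case: (has _ _).
  lia.
exists [:: b], (v1 ++ v2); split => //.
rewrite L_single /= orbF; lia.
Qed.

Lemma cat_split (v1 v2 u1 u2 : seq B) : v1 ++ v2 = u1 ++ u2 ->
  (exists w, u1 = v1 ++ w /\ v2 = w ++ u2) \/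
  (exists w, v1 = u1 ++ w /\ u2 = w ++ v2).
Proof.
elim: v1 u1 => [|a v1 IH] [|b u1] /=.
- by move=> ->; left; exists [::].
- by move=> ->; left; exists (b :: u1).
- by move=> <-; right; exists (a :: v1).
case=> <- /IH [[w [-> ->]]|[w [-> ->]]]; [left|right]; by exists w.
Qed.

Lemma L_monge1 a p u q : (L [::a] (p ++ u ++ q) + L [::a] u <=
   L [::a] (p ++ u) + L [::a] (u ++ q))%N.
Proof.
rewrite !L_single !has_cat.
by case: (has _ p); case: (has _ u); case: (has _ q).
Qed.

Lemma L_monge s p u q : (L s (p ++ u ++ q) + L s u <= L s (p ++ u) + L s (u ++ q))%N.
Proof.
elim: s p u q => [|a s IH] p u q //.
have [v1 [v2 [E1 H1]]] := L_split_ex a s (p ++ u ++ q).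
have [u1 [u2 [E2 H2]]] := L_split_ex a s u.
have E1' : v1 ++ v2 = (p ++ u1) ++ (u2 ++ q) by rewrite -E1 E2 !catA.
case: (cat_split _ _ _ _ E1') => [[w [Ew1 Ew2]]|[w [Ew1 Ew2]]].
- have K1 := L_split_le a s v1 (w ++ u2).
  have K2 := L_split_le a s u1 (u2 ++ q).
  have K3 := IH w u2 q.
  have Epu : p ++ u = v1 ++ (w ++ u2) by rewrite E2 catA Ew1 catA.
  have Euq : u ++ q = u1 ++ (u2 ++ q) by rewrite E2 catA.
  rewrite -Epu -Euq in K1 K2.
  rewrite Ew2 in H1. lia.
- have K1 := L_split_le a s (p ++ u1) u2.
  have K2 := L_split_le a s (u1 ++ w) v2.
  have K3 := L_monge1 a p u1 w.
  have Epu : p ++ u = (p ++ u1) ++ u2 by rewrite E2 catA.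
  have Euq : u ++ q = (u1 ++ w) ++ v2 by rewrite E2 -catA Ew2 catA.
  rewrite -Epu -Euq in K1 K2.
  rewrite Ew1 -catA in H1. lia.
Qed.

End LCS.

Local Open Scope ring_scope.

Section Main.
Variable T : eqType.

Lemma L_nseq (s : seq T) d :
  lcs_with (@wmatch T) s (nseq d None) = minn (size s) d.
Proof.
elim: s d => [|a s IH] d; first by rewrite min0n.
elim: d => [|d IHd]; first by rewrite L_nil_r minn0.
rewrite (_ : nseq d.+1 None = None :: nseq d None) // L_cons -[None :: nseq d None]/(nseq d.+1 None) !IH IHd.
rewrite [wmatch _ _]/= add1n; change (size (a :: s)) with (size s).+1; lia.
Qed.

Definition W (y : seq T) (i : int) (d : nat) :=
  [seq ychar y (i + k%:Z) | k <- iota 1 d].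

Lemma psubE y i d : psub y i (i + d%:Z) = W y i d.
Proof.
by rewrite /psub /W (_ : i + d%:Z - i = d%:Z) // addrAC subrr add0r.
Qed.

Lemma W_rcons y i d : W y i d.+1 = rcons (W y i d) (ychar y (i + d.+1%:Z)).
Proof. rewrite /W (_ : iota 1 d.+1 = iota 1 d ++ [:: d.+1]) ?map_cat ?cats1 //. by rewrite -(addn1 d) iotaD /= cats1 add1n addn1. Qed.

Lemma W_cons y i d : W y i d.+1 = ychar y (i + 1) :: W y (i + 1) d.
Proof.
rewrite /W (_ : iota 1 d.+1 = 1%N :: iota 2 d) // map_cons.
congr (_ :: _); rewrite (iotaDl 1 1 d) -map_comp; apply: eq_map => k /=.
congr ychar; rewrite -addrA; congr (_ + _); lia.
Qed.

Lemma W_wild y i d : ((size y)%:Z <= i \/ i + d%:Z <= 0) -> W y i d = nseq d None.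
Proof.
move=> H.
suff -> : W y i d = nseq (size (W y i d)) None by rewrite size_map size_iota.
apply/all_pred1P/allP => c /mapP [k]; rewrite mem_iota => /andP [k1 k2] -> /=.
rewrite /ychar; case: ifP => // pos.
apply/eqP; rewrite onth_default //.
case E: (i + k%:Z) pos => [p|p] // p0.
have : ((size y)%:Z <= (p%:Z) - 1) by lia.
simpl; lia.
Qed.

Lemma hsm_le (x y : seq T) i j : j <= i -> hsm x y i j = j - i.
Proof.
move=> ji; rewrite /hsm; case: ifP => // ij.
have -> : j = i + 0%:Z by lia.
by rewrite psubE /W /= L_nil_r; lia.
Qed.

Lemma hsm_W (x y : seq T) i d :
  hsm x y i (i + d%:Z) = (lcs_with (@wmatch T) x (W y i d))%:Z.
Proof. by rewrite /hsm ifT ?psubE //; lia. Qed.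

Lemma hsm_D (x y : seq T) h k : h <= k ->
  hsm x y h k + hsm x y (h+1) (k+1) - hsm x y h (k+1) - hsm x y (h+1) k =
  ([&& hsm x y (h+1) k + 1 == hsm x y h k,
       hsm x y h k == hsm x y (h+1) (k+1) &
       hsm x y (h+1) (k+1) == hsm x y h (k+1)] : nat)%:Z.
Proof.
move=> hk.
have [d ->] : exists d : nat, k = h + d%:Z.
  by exists (absz (k - h)); rewrite gez0_abs; lia.
case: d => [|d].
  rewrite addr0 (hsm_le x y h h) ?lexx // (hsm_le x y (h+1) h); last by lia.
  rewrite (hsm_le x y (h+1) (h+1)) ?lexx // (_ : h + 1 = h + 1%:Z) // hsm_W.
  have := L_pre _ _ (@wmatch T) x (ychar y (h + 1)) [::].
  rewrite W_cons /W /= L_nil_r.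
  case: eqP => ?; case: eqP => ?; case: eqP => ? /=; lia.
set u := W y (h + 1) d.
set al := ychar y (h + 1).
set be := ychar y (h + 1 + d.+1%:Z).
have Ea : hsm x y h (h + d.+1%:Z) = (lcs_with (@wmatch T) x (al :: u))%:Z.
  by rewrite hsm_W W_cons.
have Eb : hsm x y h (h + d.+1%:Z + 1) = (lcs_with (@wmatch T) x (al :: rcons u be))%:Z.
  by rewrite (_ : h + d.+1%:Z + 1 = h + d.+2%:Z); [rewrite hsm_W W_cons W_rcons|lia].
have Ec : hsm x y (h + 1) (h + d.+1%:Z) = (lcs_with (@wmatch T) x u)%:Z.
  by rewrite (_ : h + d.+1%:Z = h + 1 + d%:Z); [rewrite hsm_W|lia].
have Ee : hsm x y (h + 1) (h + d.+1%:Z + 1) = (lcs_with (@wmatch T) x (rcons u be))%:Z.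
  by rewrite (_ : h + d.+1%:Z + 1 = h + 1 + d.+1%:Z); [rewrite hsm_W W_rcons|lia].
rewrite Ea Eb Ec Ee.
have F1 := L_pre _ _ (@wmatch T) x al u.
have F2 := L_app _ _ (@wmatch T) x u be.
have F3 := L_pre _ _ (@wmatch T) x al (rcons u be).
have F4 := L_app _ _ (@wmatch T) x (al :: u) be.
have F5 := L_monge _ _ (@wmatch T) x [:: al] u [:: be].
rewrite rcons_cons in F4.
rewrite !cats1 /= in F5.
case: eqP => ?; case: eqP => ?; case: eqP => ? /=; lia.
Qed.

End Main.

Theorem proposition1 (T : eqType) (x y x' y' : seq T) (w r : nat) :
  (0 < w)%N -> (0 < r)%N ->
  size x' = size x -> size y' = size y ->
  (forall h k : int, k - h < w%:Z -> critical x y h k = critical x' y' h k) ->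
  forall i j : int, restricted_dom (size x) (size y) w r i j ->
    hsm x y i j = hsm x' y' i j.
Proof.
move=> w0 r0 Sx Sy Hc i j.
case/andP=> H1 /andP[_ /andP[_ /andP[H4 /andP[H5 _]]]].
set m := size x in H1 H4 Sx Hc *; set n := size y in H4 Sy Hc *.
suff: forall N : nat, forall i j : int, j - i <= N%:Z -> - (m%:Z) <= i ->
   j <= (m + n)%N%:Z -> j - i <= w%:Z -> hsm x y i j = hsm x' y' i j.
  by move=> /(_ (absz (j - i)) i j); apply => //; lia.
elim=> [|N IH] {H1 H4 H5 i j} i j hN hi hj hw.
  by rewrite !hsm_le //; lia.
have [ji|ij] := lerP j i; first by rewrite !hsm_le.
have [d Ed] : exists d : nat, j = i + d%:Z.
  by exists (absz (j - i)); rewrite gez0_abs; lia.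
have [wild|nwild] := boolP ((n%:Z <= i) || (j <= 0)).
  rewrite Ed !hsm_W !W_wild ?L_nseq ?Sx //; rewrite ?Sy; move: wild => /orP [] ?; lia.
set k := j - 1.
have -> : j = k + 1 by rewrite /k subrK.
have hik : i <= k by rewrite /k; lia.
have Dx := hsm_D T x y i k hik.
have Dx' := hsm_D T x' y' i k hik.
have Ck := Hc i k (_ : k - i < w%:Z).
rewrite /critical in Ck; cbv zeta in Ck.
rewrite Sx Sy in Ck.
have R1 : - m%:Z <= i by [].
have R2 : i < n%:Z by lia.
have R3 : 0 <= k by rewrite /k; lia.
have R4 : k < m%:Z + n%:Z by rewrite /k; lia.
rewrite R1 R2 R3 R4 /= in Ck.
have I1 := IH i k.
have I2 := IH (i + 1) (k + 1).
have I3 := IH (i + 1) k.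
have E1 : hsm x y i k = hsm x' y' i k by apply: I1; rewrite /k; lia.
have E2 : hsm x y (i+1) (k+1) = hsm x' y' (i+1) (k+1) by apply: I2; rewrite /k; lia.
have E3 : hsm x y (i+1) k = hsm x' y' (i+1) k by apply: I3; rewrite /k; lia.
rewrite -Ck in Dx'.
lia.
Unshelve. rewrite /k; lia.
Qed.
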